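(* Let $m>2\times 10^{31}$ be a positive integer. Then $W(m)<m^{2/9}$.
   Context: For a positive integer $m$, $\omega(m)$ is the number of distinct prime divisors of $m$ and $W(m)=2^{\omega(m)}$. *)

(* Defs.v *)
From mathcomp Require Import all_boot.
From Stdlib Require Import Reals.

Definition omega (m : nat) : nat := size (primes m).
Definition W (m : nat) : nat := 2 ^ omega m.

(* Main.v *)
Require Import Defs.
From mathcomp Require Import all_boot.
From Stdlib Require Import Reals Lra.
From mathcomp Require Import ssreflect ssrnat.

Definition P0 : seq nat := [:: 2; 3; 5; 7; 11; 13; 17; 19; 23; 29; 31; 37; 41; 43; 47; 53; 59; 61].
Definition W0 : seq nat := [:: 32768; 9710; 2098; 765; 197; 120; 54; 39; 22; 11; 9; 6; 4; 4; 3; 2; 2; 2].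
Definition cw (p : nat) : nat := nth 1 W0 (index p P0).

Lemma cw_out p : p \notin P0 -> cw p = 1.
Proof. by move=> h; rewrite /cw nth_default // memNindex. Qed.

Lemma small_ok : all (fun p => prime p ==> (2^18 <= p^3 * cw p)) (iota 0 64).
Proof. vm_compute. reflexivity. Qed.

Lemma prime_ok p : prime p -> 2^18 <= p^3 * cw p.
Proof.
move=> pp; case: (ltnP p 64) => h.
  have hi : p \in iota 0 64 by rewrite mem_iota add0n.
  by have /implyP := allP small_ok p hi; apply.
have h1 : 2^18 <= p^3.
  have e : 2^18 = (2^6)^3 by rewrite -expnM.
  rewrite e leq_exp2r //.
apply: (leq_trans h1); rewrite leq_pmulr //.
rewrite /cw; case: (boolP (p \in P0)) => hp.
  rewrite /P0 in hp; move: hp; rewrite !inE.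
  by do !case/orP; move/eqP=> ->.
by rewrite nth_default // memNindex.
Qed.

Lemma cw_pos p : 0 < cw p.
Proof.
rewrite /cw; case: (ltnP (index p P0) (size W0)) => h; last by rewrite nth_default.
have hW : all (fun w => 0 < w) W0 by [].
exact: (allP hW _ (mem_nth 1 h)).
Qed.

Lemma prod_bound (s : seq nat) : all prime s ->
  2 ^ (18 * size s) <= (\prod_(p <- s) p) ^ 3 * \prod_(p <- s) cw p.
Proof.
elim: s => [|x s IH] /=; first by rewrite !big_nil.
case/andP=> px ps; rewrite !big_cons mulnS expnD.
apply: (leq_trans (leq_mul (prime_ok _ px) (IH ps))).
by rewrite expnMn mulnACA.
Qed.

Lemma sub_bound (s Q : seq nat) : uniq s ->
  (forall p, p \in s -> p \notin Q -> cw p = 1) ->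
  \prod_(p <- s) cw p <= \prod_(p <- Q) cw p.
Proof.
elim: s Q => [|x s IH] Q /=; first by move=> _ _; rewrite big_nil prodn_gt0 // => i; exact: cw_pos.
case/andP=> xs us H; rewrite big_cons.
case: (boolP (x \in Q)) => xQ.
  rewrite (perm_big _ (perm_to_rem xQ)) big_cons leq_mul2l; apply/orP; right.
  apply: IH => // p ps pQ; apply: H; first by rewrite inE ps orbT.
  apply: contra pQ => pQ'.
  have xp : p != x by apply: contraNneq xs => <-.
  exact: rem_mem.
rewrite H ?inE ?eqxx // mul1n; apply: IH => // p ps pQ; apply: H => //.
by rewrite inE ps orbT.
Qed.

Lemma prod_le_m m : 0 < m -> \prod_(p <- primes m) p <= m.
Proof.
move=> m0; rewrite {2}(prod_prime_decomp m0) prime_decompE big_map /=.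
rewrite big_seq_cond [X in _ <= X]big_seq_cond; apply: leq_prod => p /andP[hp _].
have pp : prime p by move: hp; rewrite mem_primes => /andP[].
rewrite -{1}(expn1 p); apply: leq_pexp2l; first exact: prime_gt0.
by rewrite logn_gt0.
Qed.

Lemma C_eq : \prod_(p <- P0) cw p =
  (32 * (32 * 32)) * ((10 * 971) * ((2 * 1049) * (765 * (197 * (120 * (54 * (39 * (22 * (11 * (9 * (6 * (4 * (4 * (3 * (2 * (2 * (2 * 1))))))))))))))))).
Proof. rewrite /P0 !big_cons big_nil. reflexivity. Qed.

Open Scope R_scope.

Lemma C_bound : INR (\prod_(p <- P0) cw p) < 2 * 10 ^ 31.
Proof.
rewrite C_eq !mult_INR !INR_IZR_INZ; simpl Z.of_nat. lra.
Qed.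

Lemma INR_expn a b : INR (expn a b) = INR a ^ b.
Proof.
elim: b => [|b IH]; first by rewrite expn0.
by rewrite expnS mult_INR IH.
Qed.

Theorem lemma4p1 (m : nat) (hm : 2 * 10 ^ 31 < INR m) :
  INR (W m) < Rpower (INR m) (2 / 9).
Proof.
have m0 : (0 < m)%N.
  apply/ltP; apply: INR_lt; simpl INR; lra.
set k := size (primes m).
set C := \prod_(p <- P0) cw p.
have hn : (2 ^ (18 * k) <= m ^ 3 * C)%N.
  apply: leq_trans (prod_bound _ (all_prime_primes m)) _.
  apply: leq_mul; first by rewrite leq_exp2r // prod_le_m.
  apply: sub_bound; first exact: primes_uniq.
  by move=> p _ hp; apply: cw_out.
have hr : 2 ^ (18 * k) <= INR m ^ 3 * INR C.
  have := le_INR _ _ (elimT leP hn); rewrite (mult_INR (m ^ 3) C) !INR_expn.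
  by [].
have Cb := C_bound; rewrite -/C in Cb.
have Mpos : 0 < INR m by lra.
have h4 : 2 ^ (18 * k) < INR m ^ 4.
  have M3 : 0 < INR m ^ 3 by apply: pow_lt.
  have : INR m ^ 3 * INR C < INR m ^ 3 * INR m by apply: Rmult_lt_compat_l; lra.
  rewrite -(tech_pow_Rmult (INR m) 3) in M3 *; simpl pow in *. nra.
have hl := ln_increasing _ _ (pow_lt 2 (18 * k) ltac:(lra)) h4.
rewrite !ln_pow // in hl; last lra.
rewrite mult_INR in hl.
have e18 : INR 18 = 18 by rewrite INR_IZR_INZ.
have e4 : INR 4 = 4 by rewrite INR_IZR_INZ.
rewrite e18 e4 in hl.
rewrite /W pow_INR /omega -/k -(Rpower_pow k 2); last lra.
rewrite /Rpower; apply: exp_increasing.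
idtac.
nra.
Qed.
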